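(* In the cell FDE setting described in the context, assume (H1), (H2), (H3), that there exists $(\varphi,\psi)\in X_+$ with $\min\{\varphi(0),\psi(0)\}>0$, that $q(0)>0$, that $j(0)=0$, and that there exists $K$ such that $j(\varphi,0)>0$ whenever $(\varphi,\psi)\in U_+$ and $\min_{[-h,0]}\varphi\ge K$. Let $\rho_1(\varphi,\psi):=\varphi(0)$ and $\rho_m(\varphi,\psi):=\min\{\varphi(0),\psi(0)\}$ on $X_+$, and for a function $\rho$ on $X_+$ let $X_0^\rho:=\{\phi\in X_+:\ \rho(S_+(t,\phi))=0\ \text{for all } t\ge0\}$. Then $X_0^{\rho_1}=X_0^{\rho_m}=\{(\varphi,\psi)\in X_+:\ \varphi(0)=0\}$.
   Context: Let $h>0$, $R_-<0$, $I:=(R_-,\infty)$. $\|\phi\|_0:=\max_{\theta\in[-h,0]}|\phi(\theta)|$, $\|\phi\|_1:=\|\phi\|_0+\|\phi'\|_0$; $x_t(s):=x(t+s)$, $s\in[-h,0]$. Let $U:=C^1([-h,0],\mathbb R)\times C^1([-h,0],I)$, $U_+:=C^1([-h,0],[0,\infty)^2)$, $q:I\to\mathbb R$, $j:U\to\mathbb R$, $\mu\ge0$. Cell FDE: $w'(t)=q(v(t))w(t)$, $v'(t)=j(w_t,v_t)-\mu v(t)$, $t>0$, $(w_0,v_0)=(\varphi,\psi)$. $F(\varphi,\psi):=(q(\psi(0))\varphi(0),j(\varphi,\psi)-\mu\psi(0))$, $X:=\{\phi\in U:\phi'(0)=F(\phi)\}$, $X_+:=X\cap U_+$. Solutions are $C^1$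 maps $x=(w,v)$ on $[-h,t_* )$ with $x_0=\phi$, $x_t\in U$, satisfying the equations on $(0,t_* )$. (S): $f$ is $C^1$, each $Df(\phi)$ extends to a linear map on $C([-h,0],\mathbb R^n)$ and $(\phi,\chi)\mapsto D_ef(\phi)\chi$ is continuous. (sLb) on $\mathcal O_+$: for each $\|\cdot\|_1$-bounded $B\subset\mathcal O_+$ there is $L_B$ with $|f(\phi)-f(\chi)|\le L_B\|\phi-\chi\|_0$ on $B$. (H1): $j$ satisfies (S) on $U$, (sLb) on $U_+$, $j\ge0$ on $U_+$, and $j(B_1\times B_2)$ is bounded whenever $B_1\times B_2\subset U_+$ with $B_1$ bounded. (H2): $q$ bounded and $C^1$. (H3): $X_+\neq\emptyset$. Under (H1)-(H3) each $\phi\in X_+$ has a unique solution $x^\phi$ on $[-h,\infty)$ with segments in $X_+$ and $S_+(t,\phi):=x^\phi_t$ is a continuous semiflow on $X_+$. *)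

(* Defs.v *)
From Stdlib Require Import Reals ClassicalEpsilon.
Open Scope R_scope.

(* Real functions; elements of C([-h,0],R) are represented by functions
   R -> R of which only the values on [-h,0] matter. *)
Definition fn := R -> R.
(* elements of C([-h,0],R^2) = pairs (phi, psi) *)
Definition pt := (fn * fn)%type.

Definition Icl (h s : R) : Prop := -h <= s <= 0.

Definition contw (D : R -> Prop) (f : fn) (s : R) : Prop :=
  forall eps, 0 < eps -> exists d, 0 < d /\
    forall y, D y -> Rabs (y - s) < d -> Rabs (f y - f s) < eps.

Definition derw (D : R -> Prop) (f : fn) (s l : R) : Prop :=
  forall eps, 0 < eps -> exists d, 0 < d /\
    forall y, D y -> y <> s -> Rabs (y - s) < d ->
      Rabs ((f y - f s) / (y - s) - l) < eps.

Definition C1with (D : R -> Prop) (f f' : fn) : Prop :=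
  (forall s, D s -> derw D f s (f' s)) /\ (forall s, D s -> contw D f' s).

Definition C1 (h : R) (f : fn) : Prop := exists f', C1with (Icl h) f f'.
Definition C0 (h : R) (f : fn) : Prop := forall s, Icl h s -> contw (Icl h) f s.

(* the derivative of f on [-h,0] (unique when h > 0 and f is C^1) *)
Definition dv (h : R) (f : fn) : fn :=
  fun s => epsilon (inhabits 0) (derw (Icl h) f s).

Definition nrm0 (h : R) (f : fn) : R :=
  epsilon (inhabits 0) (fun m =>
    (exists s, Icl h s /\ m = Rabs (f s)) /\
    (forall s, Icl h s -> Rabs (f s) <= m)).

(* on R^2 we use the max norm |(a,b)| = max(|a|,|b|) *)
Definition nrm0p (h : R) (p : pt) : R := Rmax (nrm0 h (fst p)) (nrm0 h (snd p)).
Definition dvp (h : R) (p : pt) : pt := (dv h (fst p), dv h (snd p)).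
Definition nrm1p (h : R) (p : pt) : R := nrm0p h p + nrm0p h (dvp h p).
Definition nrm1 (h : R) (f : fn) : R := nrm0 h f + nrm0 h (dv h f).

Definition padd (p r : pt) : pt := (fun s => fst p s + fst r s, fun s => snd p s + snd r s).
Definition psub (p r : pt) : pt := (fun s => fst p s - fst r s, fun s => snd p s - snd r s).
Definition pscal (c : R) (p : pt) : pt := (fun s => c * fst p s, fun s => c * snd p s).
Definition pzero : pt := (fun _ => 0, fun _ => 0).

Definition C1p (h : R) (p : pt) : Prop := C1 h (fst p) /\ C1 h (snd p).
Definition C0p (h : R) (p : pt) : Prop := C0 h (fst p) /\ C0 h (snd p).

Definition U (h Rm : R) (p : pt) : Prop :=
  C1p h p /\ forall s, Icl h s -> Rm < snd p s.
Definition Uplus (h : R) (p : pt) : Prop :=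
  C1p h p /\ forall s, Icl h s -> 0 <= fst p s /\ 0 <= snd p s.

Definition respects (h : R) (f : pt -> R) : Prop :=
  forall p r, (forall s, Icl h s -> fst p s = fst r s /\ snd p s = snd r s) ->
    f p = f r.

Definition linear_on (P : pt -> Prop) (L : pt -> R) : Prop :=
  (forall a b, P a -> P b -> L (padd a b) = L a + L b) /\
  (forall c a, P a -> L (pscal c a) = c * L a).

Definition condS (h Rm : R) (f : pt -> R) : Prop :=
  exists Df : pt -> pt -> R,
    (forall p, U h Rm p -> linear_on (C1p h) (Df p) /\
       exists c, forall x, C1p h x -> Rabs (Df p x) <= c * nrm1p h x) /\
    (forall p, U h Rm p -> forall eps, 0 < eps -> exists d, 0 < d /\
       forall x, C1p h x -> U h Rm (padd p x) -> nrm1p h x < d ->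
         Rabs (f (padd p x) - f p - Df p x) <= eps * nrm1p h x) /\
    (forall p, U h Rm p -> forall eps, 0 < eps -> exists d, 0 < d /\
       forall r, U h Rm r -> nrm1p h (psub r p) < d ->
         forall x, C1p h x -> Rabs (Df r x - Df p x) <= eps * nrm1p h x) /\
    exists De : pt -> pt -> R,
      (forall p, U h Rm p -> linear_on (C0p h) (De p) /\
         forall x, C1p h x -> De p x = Df p x) /\
      (forall p x, U h Rm p -> C0p h x -> forall eps, 0 < eps ->
         exists d, 0 < d /\ forall p' x', U h Rm p' -> C0p h x' ->
           nrm1p h (psub p' p) < d -> nrm0p h (psub x' x) < d ->
           Rabs (De p' x' - De p x) < eps).

Definition sLb (h : R) (f : pt -> R) : Prop :=
  forall B : pt -> Prop, (forall p, B p -> Uplus h p) ->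
    (exists M, forall p, B p -> nrm1p h p <= M) ->
    exists L, forall p r, B p -> B r -> Rabs (f p - f r) <= L * nrm0p h (psub p r).

Definition H1 (h Rm : R) (j : pt -> R) : Prop :=
  respects h j /\ condS h Rm j /\ sLb h j /\
  (forall p, Uplus h p -> 0 <= j p) /\
  (forall B1 B2 : fn -> Prop,
     (forall a b, B1 a -> B2 b -> Uplus h (a, b)) ->
     (exists M, forall a, B1 a -> nrm1 h a <= M) ->
     exists M', forall a b, B1 a -> B2 b -> Rabs (j (a, b)) <= M').

Definition H2 (Rm : R) (q : R -> R) : Prop :=
  (exists M, forall x, Rm < x -> Rabs (q x) <= M) /\
  exists q' : R -> R,
    (forall x, Rm < x -> derivable_pt_lim q x (q' x)) /\
    (forall x, Rm < x -> contw (fun y => Rm < y) q' x).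

Definition X (h Rm : R) (q : R -> R) (j : pt -> R) (mu : R) (p : pt) : Prop :=
  U h Rm p /\
  dv h (fst p) 0 = q (snd p 0) * fst p 0 /\
  dv h (snd p) 0 = j p - mu * snd p 0.
Definition Xplus h Rm q j mu (p : pt) : Prop := X h Rm q j mu p /\ Uplus h p.

Definition seg (x : pt) (t : R) : pt := (fun s => fst x (t + s), fun s => snd x (t + s)).

Definition is_solution h Rm q j mu (phi : pt) (x : pt) : Prop :=
  (forall s, Icl h s -> fst x s = fst phi s /\ snd x s = snd phi s) /\
  (exists w' v',
     C1with (fun s => -h <= s) (fst x) w' /\
     C1with (fun s => -h <= s) (snd x) v' /\
     forall t, 0 < t ->
       w' t = q (snd x t) * fst x t /\
       v' t = j (seg x t) - mu * snd x t) /\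
  (forall t, 0 <= t -> U h Rm (seg x t)).

Definition is_semiflow h Rm q j mu (S : R -> pt -> pt) : Prop :=
  forall phi, Xplus h Rm q j mu phi ->
    exists x, is_solution h Rm q j mu phi x /\
      (forall t, 0 <= t -> Xplus h Rm q j mu (seg x t)) /\
      (forall t, 0 <= t -> S t phi = seg x t).

Definition rho1 (p : pt) : R := fst p 0.
Definition rhom (p : pt) : R := Rmin (fst p 0) (snd p 0).

Definition X0 h Rm q j mu (S : R -> pt -> pt) (rho : pt -> R) (p : pt) : Prop :=
  Xplus h Rm q j mu p /\ forall t, 0 <= t -> rho (S t p) = 0.

(* Main.v *)
Require Import Defs.
From Stdlib Require Import Reals.
From Stdlib Require Import Lra Psatz Classical.
Open Scope R_scope.

Lemma derw_lim a f s l : a < s -> derw (fun y => a <= y) f s l -> derivable_pt_lim f s l.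
Proof.
  intros Has Hd eps Heps. destruct (Hd eps Heps) as [d [Hd0 Hd1]].
  assert (Hpos: 0 < Rmin d (s-a)) by (apply Rmin_pos; lra).
  exists (mkposreal _ Hpos). intros hh Hh0 Hhl. simpl in Hhl.
  specialize (Hd1 (s+hh)).
  replace (s + hh - s) with hh in Hd1 by ring.
  pose proof (Rmin_r d (s-a)). pose proof (Rmin_l d (s-a)).
  apply Rabs_def2 in Hhl.
  apply Hd1.
  - lra.
  - intro; apply Hh0; lra.
  - apply Rabs_def1; lra.
Qed.

Lemma mono_le f f' a b : a <= b -> (forall c, a<=c<=b -> derivable_pt_lim f c (f' c)) ->
  (forall c, a<c<b -> 0 <= f' c) -> f a <= f b.
Proof.
  intros Hab Hd Hs. destruct (Req_dec a b) as [E|E]. { subst; lra. }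
  destruct (MVT_cor2 f f' a b) as [c [Ec Hc]]; [lra|exact Hd|].
  assert (0 <= f' c) by (apply Hs; lra). nra.
Qed.

Lemma mono_ge f f' a b : a <= b -> (forall c, a<=c<=b -> derivable_pt_lim f c (f' c)) ->
  (forall c, a<c<b -> f' c <= 0) -> f b <= f a.
Proof.
  intros Hab Hd Hs. destruct (Req_dec a b) as [E|E]. { subst; lra. }
  destruct (MVT_cor2 f f' a b) as [c [Ec Hc]]; [lra|exact Hd|].
  assert (f' c <= 0) by (apply Hs; lra). nra.
Qed.

Lemma dexpw k w w' t : derivable_pt_lim w t (w' t) ->
  derivable_pt_lim (fun u => exp (k*u) * w u) t (exp (k*t) * (k * w t + w' t)).
Proof.
  intros Hw.
  assert (HL: derivable_pt_lim (fun u => k*u) t k).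
  { pose proof (derivable_pt_lim_scal id k t 1 (derivable_pt_lim_id t)) as H.
    rewrite Rmult_1_r in H. exact H. }
  assert (HE: derivable_pt_lim (fun u => exp (k*u)) t (exp (k*t) * k)).
  { apply (derivable_pt_lim_comp (fun u => k*u) exp t k (exp (k*t)) HL).
    apply derivable_pt_lim_exp. }
  pose proof (derivable_pt_lim_mult _ _ t _ _ HE Hw) as Hm.
  replace (exp (k*t) * (k*w t + w' t)) with (exp(k*t)*k * w t + exp (k*t) * w' t) by ring.
  exact Hm.
Qed.

Lemma small0 a : (forall eps, 0 < eps -> Rabs a < eps) -> a = 0.
Proof.
  intros H. destruct (Req_dec a 0) as [E|E]; auto.
  assert (0 < Rabs a) by (apply Rabs_pos_lt; auto).
  specialize (H _ H0). lra.
Qed.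
Lemma main (h Rm mu : R) (q : R -> R) (j : pt -> R) (S : R -> pt -> pt) (M K : R)
  (hh : 0 < h) (HM : forall x, Rm < x -> Rabs (q x) <= M)
  (Hresp : respects h j) (hq0 : 0 < q 0)
  (HK : forall phi psi, Uplus h (phi, psi) ->
          (forall s, Icl h s -> K <= phi s) -> 0 < j (phi, fun _ => 0))
  (hS : is_semiflow h Rm q j mu S) (p : pt) (Hp : Xplus h Rm q j mu p) :
  exists x, (forall t, 0<=t -> S t p = seg x t) /\
    (fst p 0 = 0 -> forall t, 0 <= t -> fst x t = 0) /\ fst x 0 = fst p 0 /\
    (0 < fst p 0 -> exists t, 0 <= t /\ Rmin (fst x t) (snd x t) <> 0) /\
    (forall t, 0<=t -> 0 <= snd x t).
Proof.
  destruct (hS p Hp) as [x [[Hinit [[w' [v' [Cw [Cv Eq]]]] _]] [Hseg HS]]].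
  exists x. split; [exact HS|].
  set (w := fst x). set (v := snd x).
  assert (I0 : Icl h 0) by (unfold Icl; lra).
  assert (Fw0 : forall t, 0<=t -> 0 <= w t /\ 0 <= v t /\ Rm < v t).
  { intros t Ht. destruct (Hseg t Ht) as [[[_ HU] _] [_ HUp]].
    specialize (HU 0 I0). specialize (HUp 0 I0). simpl in HU, HUp.
    rewrite Rplus_0_r in HU, HUp. unfold w, v. lra. }
  assert (Dw : forall t, 0 <= t -> derivable_pt_lim w t (w' t)).
  { intros t Ht. apply (derw_lim (-h)); [lra|]. apply (proj1 Cw). lra. }
  assert (Dv : forall t, 0 <= t -> derivable_pt_lim v t (v' t)).
  { intros t Ht. apply (derw_lim (-h)); [lra|]. apply (proj1 Cv). lra. }
  assert (Bnd : forall t, 0 < t -> Rabs (w' t) <= M * w t).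
  { intros t Ht. rewrite (proj1 (Eq t Ht)). rewrite Rabs_mult.
    destruct (Fw0 t (Rlt_le _ _ Ht)) as [A [B C]].
    rewrite (Rabs_pos_eq (fst x t)) by exact A.
    apply Rmult_le_compat_r; [exact A|]. apply HM. exact C. }
  assert (G1 : forall t, 0 <= t -> exp (-M * t) * w t <= w 0).
  { intros t Ht.
    assert (E0 : w 0 = exp (-M*0) * w 0) by (rewrite Rmult_0_r, exp_0; ring).
    rewrite E0.
    apply (mono_ge (fun u => exp (-M*u) * w u) (fun u => exp (-M*u) * (-M * w u + w' u)) 0 t Ht).
    - intros c Hc. apply dexpw. apply Dw. lra.
    - intros c Hc. pose proof (exp_pos (-M*c)). pose proof (Bnd c ltac:(lra)).
      pose proof (Rle_abs (w' c)). nra. }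
  assert (G2 : forall t, 0 <= t -> w 0 <= exp (M * t) * w t).
  { intros t Ht.
    assert (E0 : w 0 = exp (M*0) * w 0) by (rewrite Rmult_0_r, exp_0; ring).
    rewrite E0 at 1.
    apply (mono_le (fun u => exp (M*u) * w u) (fun u => exp (M*u) * (M * w u + w' u)) 0 t Ht).
    - intros c Hc. apply dexpw. apply Dw. lra.
    - intros c Hc. pose proof (exp_pos (M*c)). pose proof (Bnd c ltac:(lra)).
      pose proof (Rle_abs (- w' c)). rewrite Rabs_Ropp in H1. nra. }
  assert (Hw0 : w 0 = fst p 0) by (unfold w; apply (proj1 (Hinit 0 I0))).
  split; [|split; [exact Hw0|split]].
  - intros H0 t Ht. specialize (G1 t Ht). fold w. rewrite Hw0, H0 in G1.
    pose proof (exp_pos (-M*t)). destruct (Fw0 t Ht). nra.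
  - intros Hpos. destruct (classic (exists t, 0 <= t /\ Rmin (fst x t) (snd x t) <> 0)) as [HE|Hn]; [exact HE|exfalso].
    assert (Hm : forall t, 0 <= t -> Rmin (w t) (v t) = 0).
    { intros t Ht. destruct (Req_dec (Rmin (w t) (v t)) 0) as [E|E]; auto. exfalso; apply Hn; exists t; auto. }
    rewrite <- Hw0 in Hpos.
    assert (wpos : forall t, 0 <= t -> 0 < w t).
    { intros t Ht. specialize (G2 t Ht). pose proof (exp_pos (M*t)). destruct (Fw0 t Ht). nra. }
    assert (vz : forall t, 0 <= t -> v t = 0).
    { intros t Ht. specialize (Hm t Ht). specialize (wpos t Ht). destruct (Fw0 t Ht) as [_ [A _]].
      unfold Rmin in Hm. destruct (Rle_dec (w t) (v t)); lra. }
    assert (Ew2 : forall t, 0 < t -> w' t = q 0 * w t).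
    { intros t Ht. rewrite (proj1 (Eq t Ht)). fold v. rewrite (vz t) by lra. reflexivity. }
    assert (winc : forall t, 0 <= t -> w 0 <= w t).
    { intros t Ht. apply (mono_le w w' 0 t Ht).
      - intros c Hc. apply Dw; lra.
      - intros c Hc. rewrite Ew2 by lra. specialize (wpos c ltac:(lra)). nra. }
    set (c0 := q 0 * w 0).
    assert (Hc0 : 0 < c0) by (unfold c0; nra).
    assert (lin : forall t, 0 <= t -> w 0 + c0 * t <= w t).
    { intros t Ht.
      assert (HL: forall u, derivable_pt_lim (fun u => c0*u) u c0).
      { intro u. pose proof (derivable_pt_lim_scal id c0 u 1 (derivable_pt_lim_id u)) as H.
        rewrite Rmult_1_r in H. exact H. }
      assert (A := mono_le (fun u => w u - c0 * u) (fun u => w' u - c0) 0 t Ht).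
      simpl in A. rewrite Rmult_0_r in A.
      assert (w 0 - 0 <= w t - c0 * t); [|lra]. apply A.
      - intros c Hc. apply (derivable_pt_lim_minus w (fun u => c0*u)). apply Dw; lra. apply HL.
      - intros c Hc. rewrite Ew2 by lra. specialize (winc c ltac:(lra)).
        unfold c0. nra. }
    assert (v'z : forall t, 0 < t -> v' t = 0).
    { intros t Ht. rewrite <- (Ropp_involutive (v' t)). rewrite (small0 (- v' t)). ring.
      intros eps Heps. destruct (Dv t (Rlt_le _ _ Ht) eps Heps) as [del Hdel].
      assert (Hhh : 0 < Rmin del t / 2) by (pose proof (cond_pos del); apply Rdiv_lt_0_compat; [apply Rmin_pos|]; lra).
      pose proof (Rmin_l del t). pose proof (Rmin_r del t).
      specialize (Hdel (Rmin del t / 2) ltac:(lra)).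
      rewrite Rabs_pos_eq in Hdel by lra.
      specialize (Hdel ltac:(lra)).
      rewrite (vz (t + _)) in Hdel by lra. rewrite (vz t) in Hdel by lra.
      replace ((0 - 0) / (Rmin del t / 2) - v' t) with (- v' t) in Hdel by (field; lra).
      exact Hdel. }
    assert (jz : forall t, 0 < t -> j (seg x t) = 0).
    { intros t Ht. pose proof (proj2 (Eq t Ht)) as E. rewrite v'z in E by lra.
      fold v in E. rewrite (vz t) in E by lra. lra. }
    set (a := Rabs K / c0).
    assert (Ha : 0 <= a) by (unfold a; apply Rmult_le_pos; [apply Rabs_pos| left; apply Rinv_0_lt_compat; lra]).
    assert (Hca : c0 * a = Rabs K) by (unfold a; field; lra).
    set (T := h + a + 1).
    assert (HU : Uplus h (fst (seg x T), snd (seg x T))).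
    { rewrite <- surjective_pairing. apply (proj2 (Hseg T ltac:(unfold T; lra))). }
    assert (Hj := HK _ _ HU).
    assert (Hr : j (seg x T) = j (fst (seg x T), fun _ => 0)).
    { apply Hresp. intros s Hs. unfold Icl in Hs. simpl. split; [reflexivity|].
      apply vz. unfold T; lra. }
    rewrite <- Hr, jz in Hj by (unfold T; lra).
    assert (0 < 0); [|lra]. apply Hj.
    intros s Hs. unfold Icl in Hs. simpl. fold w.
    pose proof (lin (T + s) ltac:(unfold T; lra)). pose proof (Rle_abs K).
    unfold T in *. nra.
  - intros t Ht. apply (Fw0 t Ht).
Qed.

Theorem lemma19 (h Rm mu : R) (q : R -> R) (j : pt -> R) (S : R -> pt -> pt)
  (hh : 0 < h) (hRm : Rm < 0) (hmu : 0 <= mu)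
  (HH1 : H1 h Rm j) (HH2 : H2 Rm q)
  (HH3 : exists p, Xplus h Rm q j mu p)
  (hpos : exists p, Xplus h Rm q j mu p /\ 0 < Rmin (fst p 0) (snd p 0))
  (hq0 : 0 < q 0) (hj0 : j pzero = 0)
  (hK : exists K, forall phi psi, Uplus h (phi, psi) ->
          (forall s, Icl h s -> K <= phi s) -> 0 < j (phi, fun _ => 0))
  (hS : is_semiflow h Rm q j mu S) :
  (forall p, X0 h Rm q j mu S rho1 p <-> (Xplus h Rm q j mu p /\ fst p 0 = 0)) /\
  (forall p, X0 h Rm q j mu S rhom p <-> (Xplus h Rm q j mu p /\ fst p 0 = 0)).
Proof.
  destruct HH2 as [[M HM] _].
  destruct HH1 as [Hresp _].
  destruct hK as [K HK].
  assert (Hm := fun p Hp => main h Rm mu q j S M K hh HM Hresp hq0 HK hS p Hp).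
  split; intro p; split.
  - intros [Hp H0]. split; [exact Hp|].
    destruct (Hm p Hp) as [x [HS [_ [Hx0 _]]]].
    specialize (H0 0 (Rle_refl 0)). rewrite HS in H0 by lra.
    unfold rho1 in H0; simpl in H0. rewrite Rplus_0_r in H0. lra.
  - intros [Hp H0]. split; [exact Hp|]. intros t Ht.
    destruct (Hm p Hp) as [x [HS [Hz _]]].
    rewrite HS by exact Ht. unfold rho1; simpl. rewrite Rplus_0_r. apply Hz; auto.
  - intros [Hp H0]. split; [exact Hp|].
    destruct (Hm p Hp) as [x [HS [_ [Hx0 [Hpos _]]]]].
    destruct (Hp) as [_ [_ HUp]].
    assert (I0 : Icl h 0) by (unfold Icl; lra).
    destruct (HUp 0 I0) as [A _].
    destruct (Req_dec (fst p 0) 0) as [E|E]; [exact E|exfalso].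
    destruct (Hpos ltac:(lra)) as [t [Ht Hne]]. apply Hne.
    specialize (H0 t Ht). rewrite HS in H0 by exact Ht.
    unfold rhom in H0; simpl in H0. rewrite Rplus_0_r in H0. exact H0.
  - intros [Hp H0]. split; [exact Hp|]. intros t Ht.
    destruct (Hm p Hp) as [x [HS [Hz [_ [_ Hv]]]]].
    rewrite HS by exact Ht. unfold rhom; simpl. rewrite Rplus_0_r.
    rewrite (Hz H0 t Ht). apply Rmin_left. apply Hv; auto.
Qed.
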